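(* For every decision $\delta=(\delta_0,\delta_1)$ with $0<\delta_1<\delta_0<1$ there exists a decision $\delta'=(\delta'_0,\delta'_1)$ with $0<\delta'_0<\delta'_1<1$ such that $R_{\delta'}(\theta)<R_\delta(\theta)$ for every $\theta\in[0,1]$.
   Context: Bernoulli model: for $\theta\in[0,1]$, $p_\theta(x)=\theta^x(1-\theta)^{1-x}$, $x\in\{0,1\}$. A nonrandomized decision is a pair $\delta=(\delta_0,\delta_1)\in[0,1]^2$, used as the predictive distribution $p_\delta(y\mid x)=\delta_x^{\,y}(1-\delta_x)^{1-y}$ for a future $y\in\{0,1\}$ after observing $x$. The Kullback–Leibler risk is $R_\delta(\theta)=-S(\theta)+\theta^2\log\frac1{\delta_1}+\theta(1-\theta)\log\frac1{1-\delta_1}+\theta(1-\theta)\log\frac1{\delta_0}+(1-\theta)^2\log\frac1{1-\delta_0}$, where $S(\theta)=-\theta\log\theta-(1-\theta)\log(1-\theta)$ (with $0\log 0=0$) is the binary entropy. *)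

(* Defs.v *)
From Stdlib Require Import Reals Lra.
Open Scope R_scope.

Definition xlnx (x : R) : R := if Req_EM_T x 0 then 0 else x * ln x.

Definition bin_entropy (t : R) : R := - xlnx t - xlnx (1 - t).

Definition KLrisk (d0 d1 t : R) : R :=
  - bin_entropy t
  + t ^ 2 * ln (/ d1)
  + t * (1 - t) * ln (/ (1 - d1))
  + t * (1 - t) * ln (/ d0)
  + (1 - t) ^ 2 * ln (/ (1 - d0)).

(* Main.v *)
Require Import Defs.
From Stdlib Require Import Reals Lra Psatz.
Open Scope R_scope.

Lemma ln_le_sub1 x : 0 < x -> ln x <= x - 1.
Proof. intros H. pose proof (exp_ineq1_le (ln x)) as E. rewrite exp_ln in E; lra. Qed.

Lemma ln_diff_le x y : 0 < x -> 0 < y -> ln x - ln y <= x / y - 1.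
Proof.
  intros Hx Hy.
  assert (Hxy : 0 < x / y) by (apply Rdiv_lt_0_compat; lra).
  pose proof (ln_le_sub1 _ Hxy) as H.
  assert (Hiy : 0 < / y) by (apply Rinv_0_lt_compat; lra).
  unfold Rdiv in H. rewrite (ln_mult x (/ y) Hx Hiy), (ln_Rinv y Hy) in H.
  unfold Rdiv; lra.
Qed.

Lemma quad_pos t X1 X2 X3 X4 a b W :
  0 <= t <= 1 -> a <= X1 -> b <= X2 -> X3 + X4 <= W -> 0 < a -> 0 < b ->
  W * W < 4 * a * b ->
  0 < t^2 * X1 - t * (1 - t) * X4 - t * (1 - t) * X3 + (1 - t)^2 * X2.
Proof.
  intros Ht H1 H2 H3 Ha Hb HW.
  assert (Hts : 0 <= t * (1 - t)) by nra.
  assert (Hge : t^2 * a - t * (1 - t) * W + (1 - t)^2 * b <=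
     t^2 * X1 - t * (1 - t) * X4 - t * (1 - t) * X3 + (1 - t)^2 * X2).
  { assert (t^2 * a <= t^2 * X1) by (apply Rmult_le_compat_l; nra).
    assert ((1-t)^2 * b <= (1-t)^2 * X2) by (apply Rmult_le_compat_l; nra).
    assert (t*(1-t)*(X3+X4) <= t*(1-t)*W) by (apply Rmult_le_compat_l; nra).
    nra. }
  eapply Rlt_le_trans; [|exact Hge].
  destruct (Req_dec t 1) as [E|E].
  - rewrite E. ring_simplify. lra.
  - assert (Hs : 0 < 1 - t) by lra.
    assert (K : 4 * a * (t^2 * a - t * (1 - t) * W + (1 - t)^2 * b) =
      (2*a*t - W*(1-t))^2 + (4*a*b - W*W)*(1-t)^2) by ring.
    assert (0 < (4*a*b - W*W)*(1-t)^2) by (apply Rmult_lt_0_compat; nra).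
    assert (Sq : 0 <= (2*a*t - W*(1-t))^2) by (rewrite <- Rsqr_pow2; apply Rle_0_sqr).
    apply (Rmult_lt_reg_l (4 * a)); [lra|]. rewrite Rmult_0_r, K. lra.
Qed.

Theorem mainTheorem3 :
  forall d0 d1 : R, 0 < d1 -> d1 < d0 -> d0 < 1 ->
  exists e0 e1 : R, 0 < e0 /\ e0 < e1 /\ e1 < 1 /\
    forall t : R, 0 <= t <= 1 -> KLrisk e0 e1 t < KLrisk d0 d1 t.
Proof.
  intros q p hp hpq hq.
  set (c := 1 + q - p).
  set (r := sqrt c).
  assert (Hc : 1 < c) by (unfold c; lra).
  assert (Hrr : r * r = c) by (apply sqrt_sqrt; lra).
  assert (Hr0 : 0 <= r) by apply sqrt_pos.
  assert (Hr : 1 < r) by nra.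
  set (w := 2 * r * (r - 1)).
  assert (Hw : 0 < w) by (unfold w; nra).
  assert (Hcq : q - p = r * r - 1) by (rewrite Hrr; unfold c; lra).
  assert (Hwk : q - p < w).
  { rewrite Hcq. unfold w. assert (0 < (r - 1) * (r - 1)) by nra. nra. }
  exists (q / c), ((p + w) / (1 + w)).
  assert (He0 : 0 < q / c) by (apply Rdiv_lt_0_compat; lra).
  assert (E1e : 1 - (p + w) / (1 + w) = (1 - p) / (1 + w)) by (field; lra).
  assert (E0e : 1 - q / c = (1 - p) / c) by (unfold c; field; lra).
  assert (H1e : 0 < 1 - (p + w) / (1 + w))
    by (rewrite E1e; apply Rdiv_lt_0_compat; lra).
  assert (H1e0 : 0 < 1 - q / c) by (rewrite E0e; apply Rdiv_lt_0_compat; lra).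
  assert (He1 : 0 < (p + w) / (1 + w)) by (apply Rdiv_lt_0_compat; lra).
  assert (Hlt : q / c < (p + w) / (1 + w)).
  { assert (D : (p + w) / (1 + w) - q / c = (1 - p) * (w - (q - p)) / (c * (1 + w)))
      by (unfold c; field; lra).
    assert (0 < (1 - p) * (w - (q - p)) / (c * (1 + w))).
    { apply Rdiv_lt_0_compat; [apply Rmult_lt_0_compat|apply Rmult_lt_0_compat]; lra. }
    lra. }
  split; [exact He0|]. split; [exact Hlt|]. split; [lra|].
  intros t Ht.
  set (e0 := q / c) in *. set (e1 := (p + w) / (1 + w)) in *.
  assert (B1 : 1 - p / e1 <= ln e1 - ln p).
  { pose proof (ln_diff_le p e1 hp He1). lra. }
  assert (B2 : 1 - (1 - q) / (1 - e0) <= ln (1 - e0) - ln (1 - q)).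
  { pose proof (ln_diff_le (1 - q) (1 - e0) ltac:(lra) H1e0). lra. }
  assert (B3 : ln q - ln e0 <= 2 * (r - 1)).
  { assert (Eq : ln q - ln e0 = ln c).
    { unfold e0. unfold Rdiv. rewrite ln_mult, ln_Rinv; try lra.
      apply Rinv_0_lt_compat; lra. }
    rewrite Eq, <- Hrr, ln_mult by lra.
    pose proof (ln_le_sub1 r ltac:(lra)). lra. }
  assert (B4 : ln (1 - p) - ln (1 - e1) <= (1 - p) / (1 - e1) - 1)
    by (apply ln_diff_le; lra).
  assert (Ea : 1 - p / e1 = w * (1 - p) / (p + w)) by (unfold e1; field; lra).
  assert (Eb : 1 - (1 - q) / (1 - e0) = q * (q - p) / (1 - p)).
  { rewrite E0e. unfold c. field. split; lra. }
  assert (EW : (1 - p) / (1 - e1) - 1 = w) by (rewrite E1e; field; lra).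
  assert (Hmain : 0 < t^2 * (ln e1 - ln p) - t * (1 - t) * (ln (1 - p) - ln (1 - e1))
     - t * (1 - t) * (ln q - ln e0) + (1 - t)^2 * (ln (1 - e0) - ln (1 - q))).
  { apply (quad_pos t _ _ _ _ (w * (1 - p) / (p + w)) (q * (q - p) / (1 - p))
          (2 * (r - 1) + w)); try lra.
    - apply Rdiv_lt_0_compat; [apply Rmult_lt_0_compat|]; lra.
    - apply Rdiv_lt_0_compat; [apply Rmult_lt_0_compat|]; lra.
    - assert (EE : 2 * (r - 1) + w = 2 * (q - p)) by (unfold w; unfold c in Hrr; nra).
      rewrite EE.
      assert (EF : 4 * (w * (1 - p) / (p + w)) * (q * (q - p) / (1 - p)) =
                   4 * w * q * (q - p) / (p + w)) by (field; lra).
      rewrite EF.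
      apply Rmult_lt_reg_r with (p + w); [lra|].
      replace (4 * w * q * (q - p) / (p + w) * (p + w)) with (4 * w * q * (q - p))
        by (field; lra).
      assert (A1 : p * (q - p) < p * w) by (apply Rmult_lt_compat_l; lra).
      assert (A2 : 0 < q - p) by lra.
      assert (A3 : (q - p) * (p * (q - p)) < (q - p) * (p * w))
        by (apply Rmult_lt_compat_l; lra).
      nra. }
  unfold KLrisk.
  rewrite !ln_Rinv by lra.
  lra.
Qed.
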